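(* Let $D$ be an integral domain and $\star$ a semistar operation on $D$. If $D[X]$ is $\star[X]$-catenarian (i.e. $\star[X]$-catenary), then $D$ is a $\widetilde{\star}$-strong S-domain.
   Context: Let $D$ be an integral domain with quotient field $K$, $\overline{\mathcal{F}}(D)$ the set of nonzero $D$-submodules of $K$. A semistar operation on $D$ is a map $\star:\overline{\mathcal{F}}(D)\to\overline{\mathcal{F}}(D)$ with $(xE)^\star=xE^\star$ for nonzero $x\in K$, $E\subseteq F\Rightarrow E^\star\subseteq F^\star$, and $E\subseteq E^\star=(E^\star)^\star$. $E^{\star_f}:=\bigcup\{F^\star:F\subseteq E\text{ nonzero finitely generated}\}$. For a semistar operation $\ast$, a nonzero ideal $I$ is a quasi-$\ast$-ideal if $I^\ast\cap D=I$; quasi-$\ast$-primes are prime quasi-$\ast$-ideals, quasi-$\ast$-maximal ideals are maximal among proper quasi-$\ast$-ideals. $E^{\widetilde\star}:=\bigcap\{ED_P:P\in\mathrm{QMax}^{\star_f}(D)\}$. For an indeterminate $X$: $\Theta:=\{Q\in\mathrm{Spec}(D[X]):Q\cap D=(0)\text{ or }(Q\cap D)^{\star_f}\subsetneq D^\star\}$, $\mathfrak S:=D[X][Y]\setminus\bigcup\{Q[Y]:Q\in\Theta\}$, and $E^{\star[X]}:=E[Y]_{\mathfrak S}\cap K(X)$ defines a semistar operation $\star[X]$ on $D[X]$, with $\widetilde\star[X]=\star[X]$. A domain $R$ with semistar operation $\ast$ is $\ast$-catenary if for each pair $P\subset Q$ of quasi-$\ast$-primes, any two saturated chains of quasi-$\ast$-primes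 between $P$ and $Q$ have the same finite length. For a semistar operation $\ast$ on $D$, $D$ is a $\ast$-strong S-domain if each pair of adjacent quasi-$\ast$-primes $P_1\subset P_2$ of $D$ extends to adjacent quasi-$\ast[X]$-primes $P_1[X]\subset P_2[X]$ of $D[X]$. *)

(* Defs.v *)
From mathcomp Require Import all_boot all_algebra.
From mathcomp Require Export fraction.
Set Implicit Arguments. Unset Strict Implicit. Unset Printing Implicit Defensive.
Import GRing.Theory.
Local Open Scope ring_scope.

(* Subsets of a field F are predicates F -> Prop; a domain is a subring R of F. *)
Section Generic.
Variable F : fieldType.
Implicit Types (R E G I P Q : F -> Prop) (st : (F -> Prop) -> (F -> Prop)).

Definition subset E G := forall x, E x -> G x.
Definition psubset E G := subset E G /\ ~ subset G E.

Definition is_subring R :=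
  [/\ R 1, forall x y, R x -> R y -> R (x - y) & forall x y, R x -> R y -> R (x * y)].

Definition quotient_field_of R :=
  forall x : F, exists a b, [/\ R a, R b, b != 0 & x = a / b].

Definition submod R E :=
  [/\ E 0, forall x y, E x -> E y -> E (x + y),
      forall d x, R d -> E x -> E (d * x) & exists x, E x /\ x != 0].

Definition scale_set (x : F) E := fun y => exists e, E e /\ y = x * e.

Definition semistar R (st : (F -> Prop) -> (F -> Prop)) :=
  [/\ forall E, submod R E -> submod R (st E),
      forall (x : F) E, x != 0 -> submod R E ->
         forall y, st (scale_set x E) y <-> scale_set x (st E) y,
      forall E G, submod R E -> submod R G -> subset E G -> subset (st E) (st G),
      forall E, submod R E -> subset E (st E) &
      forall E, submod R E -> forall y, st (st E) y <-> st E y].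

Definition fg_span R (l : seq F) := fun x =>
  exists d : nat -> F, (forall i, R (d i)) /\ x = \sum_(i < size l) d i * l`_i.

Definition star_f R st E := fun x =>
  exists l : seq F, (exists y, fg_span R l y /\ y != 0) /\
    subset (fg_span R l) E /\ st (fg_span R l) x.

Definition ideal R I :=
  [/\ subset I R, I 0, forall x y, I x -> I y -> I (x + y) &
      forall d x, R d -> I x -> I (d * x)].

Definition prime_ideal R P :=
  [/\ ideal R P, ~ P 1 & forall a b, R a -> R b -> P (a * b) -> P a \/ P b].

Definition quasi_ideal R st I :=
  [/\ ideal R I, exists x, I x /\ x != 0 & forall x, (st I x /\ R x) <-> I x].

Definition quasi_prime R st P := quasi_ideal R st P /\ prime_ideal R P.

Definition quasi_max R st P :=
  [/\ quasi_ideal R st P, ~ P 1 &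
      forall I, quasi_ideal R st I -> ~ I 1 -> subset P I -> subset I P].

(* E^{~star} = intersection of the E D_P, P quasi-star_f-maximal;
   x \in E D_P  iff  s x \in E for some s \in D \ P *)
Definition tilde R st E := fun x =>
  forall P, quasi_max R (star_f R st) P -> exists s, [/\ R s, ~ P s & E (s * x)].

Definition adjacent_qprimes R st P1 P2 :=
  [/\ quasi_prime R st P1, quasi_prime R st P2, psubset P1 P2 &
      ~ exists P, [/\ quasi_prime R st P, psubset P1 P & psubset P P2]].

Definition qchain R st P Q (C : (F -> Prop) -> Prop) :=
  [/\ forall A, C A -> quasi_prime R st A /\ subset P A /\ subset A Q,
      C P, C Q & forall A B, C A -> C B -> subset A B \/ subset B A].

Definition saturated_qchain R st P Q C :=
  qchain R st P Q C /\
  forall C', qchain R st P Q C' -> (forall A, C A -> C' A) -> forall A, C' A -> C A.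

(* C is finite with n+1 elements, i.e. a chain of length n *)
Definition chain_length (C : (F -> Prop) -> Prop) (n : nat) :=
  exists l : seq (F -> Prop), [/\ size l = n.+1,
    forall i, (i < n)%N -> psubset (nth (fun _ => False) l i) (nth (fun _ => False) l i.+1) &
    forall A, C A <-> exists2 i, (i < n.+1)%N & A = nth (fun _ => False) l i].

Definition catenary R st :=
  forall P Q, quasi_prime R st P -> quasi_prime R st Q -> psubset P Q ->
  forall C1 C2, saturated_qchain R st P Q C1 -> saturated_qchain R st P Q C2 ->
  exists n, chain_length C1 n /\ chain_length C2 n.

End Generic.

Section PolyX.
Variable K : fieldType.
Notation KX := {fraction {poly K}}.
Implicit Types (D : K -> Prop) (st : (K -> Prop) -> (K -> Prop)).

(* P[X] for P a subset of K, viewed inside K(X); D[X] = extX D *)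
Definition extX (P : K -> Prop) : KX -> Prop := fun z =>
  exists p : {poly K}, (forall i, P p`_i) /\ z = tofrac p.

Definition contr D (Q : KX -> Prop) : K -> Prop := fun a => D a /\ Q (tofrac (a%:P)).

Definition Theta D (st : (K -> Prop) -> (K -> Prop)) (Q : KX -> Prop) :=
  prime_ideal (extX D) Q /\
  ((forall a, contr D Q a -> a = 0) \/
   psubset (star_f D st (contr D Q)) (st D)).

(* S = D[X][Y] \ U { Q[Y] : Q \in Theta } *)
Definition Sset D st (g : {poly KX}) :=
  (forall i, extX D g`_i) /\ forall Q, Theta D st Q -> ~ (forall i, Q g`_i).

(* E^{star[X]} = E[Y]_S \cap K(X): z = f/g with f \in E[Y], g \in S,
   i.e. g z \in E[Y] for some g \in S *)
Definition starX D st (E : KX -> Prop) : KX -> Prop := fun z =>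
  exists g : {poly KX}, Sset D st g /\ forall i, E (g`_i * z).

Definition strong_S_domain D st :=
  forall P1 P2, adjacent_qprimes D st P1 P2 ->
    adjacent_qprimes (extX D) (starX D st) (extX P1) (extX P2).

End PolyX.

(* Main.v *)
Require Import Defs.
From mathcomp Require Import all_boot all_algebra.
From mathcomp Require boolp classical_sets.
From Stdlib Require Import Classical.
From mathcomp Require Import zify.
From Stdlib Require Import Lia.
Set Implicit Arguments. Unset Strict Implicit. Unset Printing Implicit Defensive.
Import GRing.Theory.
Local Open Scope ring_scope.

Section Basics.
Variable K : fieldType.
Variable D : K -> Prop.
Hypothesis HD : is_subring D.

Lemma D1 : D 1. Proof. by case: HD. Qed.
Lemma D0 : D 0. Proof. by case: HD => h1 hB _; rewrite -(subrr 1); apply: hB. Qed.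
Lemma DN x : D x -> D (- x). Proof. by case: HD => h1 hB _ hx; rewrite -sub0r; apply: hB => //; apply: D0. Qed.
Lemma DD x y : D x -> D y -> D (x + y).
Proof. by case: HD => h1 hB _ hx hy; rewrite -(opprK y); apply: hB => //; apply: DN. Qed.
Lemma DM x y : D x -> D y -> D (x * y). Proof. by case: HD => _ _ hM; apply: hM. Qed.
Lemma DB x y : D x -> D y -> D (x - y). Proof. by case: HD => _ hB _; apply: hB. Qed.

Definition dmod (E : K -> Prop) :=
  [/\ E 0, forall x y, E x -> E y -> E (x + y) & forall d x, D d -> E x -> E (d * x)].

Lemma dmodD : dmod D.
Proof. split; [exact: D0 | exact: DD | exact: DM]. Qed.

Lemma dmod_sum E (I : Type) (r : seq I) (P : pred I) (f : I -> K) :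
  dmod E -> (forall i, P i -> E (f i)) -> E (\sum_(i <- r | P i) f i).
Proof.
case=> E0 ED _ hf; apply: (big_ind E) => //.
Qed.

Lemma coefM_mod E (p q : {poly K}) i :
  dmod E -> (forall j, D p`_j) -> (forall j, E q`_j) -> E (p * q)`_i.
Proof.
move=> hE hp hq; rewrite coefM; apply: dmod_sum => // j _.
by case: hE => _ _ hM; apply: hM.
Qed.

Lemma coefM_modr E (p q : {poly K}) i :
  dmod E -> (forall j, E p`_j) -> (forall j, D q`_j) -> E (p * q)`_i.
Proof. by move=> hE hp hq; rewrite mulrC; apply: coefM_mod. Qed.

End Basics.

Section Poly.
Variable K : fieldType.
Variable D : K -> Prop.
Hypothesis HD : is_subring D.
Local Notation KX := {fraction {poly K}}.

Definition cst (a : K) : KX := tofrac (a%:P).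
Definition pE (E : K -> Prop) (p : {poly K}) := forall i, E p`_i.
Definition XP (P : K -> Prop) : KX -> Prop :=
  fun z => exists p, pE D p /\ P p`_0 /\ z = tofrac p.

Lemma tofrac_inj (p q : {poly K}) : tofrac p = tofrac q :> KX -> p = q.
Proof. by move/eqP; rewrite tofrac_eq => /eqP. Qed.

Lemma extX_tofrac E p : extX E (tofrac p : KX) <-> pE E p.
Proof.
split; first by case=> q [hq /tofrac_inj ->].
by move=> h; exists p.
Qed.

Lemma XP_tofrac P p : XP P (tofrac p : KX) <-> pE D p /\ P p`_0.
Proof.
split; first by case=> q [hq [h0 /tofrac_inj ->]].
by case=> h1 h2; exists p.
Qed.

Lemma ideal_dmod P : ideal D P -> dmod D P.
Proof. by case. Qed.

Lemma pE_sub E E' p : (forall x, E x -> E' x) -> pE E p -> pE E' p.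
Proof. by move=> h hp i; apply: h. Qed.

Lemma ideal_extX P : ideal D P -> ideal (extX D) (extX P).
Proof.
move=> hP; have [sPD P0 PD PM] := hP; split.
- by move=> z [p [hp ->]]; exists p; split => // i; apply: sPD.
- by exists 0; split; [move=> i; rewrite coef0|rewrite tofrac0].
- move=> _ _ [p [hp ->]] [q [hq ->]]; exists (p + q); split; last by rewrite tofracD.
  by move=> i; rewrite coefD; apply: PD.
- move=> _ _ [p [hp ->]] [q [hq ->]]; exists (p * q); split; last by rewrite tofracM.
  by move=> i; apply: (coefM_mod (D:=D)) => //; apply: ideal_dmod.
Qed.

Lemma extX_sub (E E' : K -> Prop) (z : KX) : (forall x, E x -> E' x) -> extX E z -> extX E' z.
Proof. by move=> h [p [hp ->]]; exists p; split => // i; apply: h. Qed.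

Lemma dmod_diff P a b : dmod D P -> P (a + b) -> P b -> P a.
Proof.
case=> _ PD PM hab hb; have -> : a = (a + b) + (-1) * b by rewrite mulN1r addrK.
by apply: PD => //; apply: PM => //; apply: DN => //; apply: D1.
Qed.

Lemma prime_extX P : prime_ideal D P -> prime_ideal (extX D) (extX P).
Proof.
case=> hP n1 hpr; split; first exact: ideal_extX.
  by move=> /(extX_tofrac) h; apply: n1; move: (h 0%N); rewrite coef1.
move=> _ _ [p [hp ->]] [q [hq ->]]; rewrite -tofracM => /extX_tofrac hpq.
rewrite !extX_tofrac; apply: NNPP => /not_or_and [np nq].
have [i Hi] : exists i, ~ P p`_i by apply: not_all_ex_not.
have [j Hj] : exists j, ~ P q`_j by apply: not_all_ex_not.
have exi : exists i, boolp.asbool (~ P p`_i) by exists i; apply/boolp.asboolP.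
have exj : exists j, boolp.asbool (~ P q`_j) by exists j; apply/boolp.asboolP.
case: (ex_minnP exi) => a /boolp.asboolP Ha mina.
case: (ex_minnP exj) => b /boolp.asboolP Hb minb.
have Pp k : (k < a)%N -> P p`_k.
  move=> lt; apply: NNPP => nk; have := mina k (introT (boolp.asboolP _) nk).
  by rewrite leqNgt lt.
have Pq k : (k < b)%N -> P q`_k.
  move=> lt; apply: NNPP => nk; have := minb k (introT (boolp.asboolP _) nk).
  by rewrite leqNgt lt.
have hdm := ideal_dmod hP.
move: (hpq (a + b)%N); rewrite coefM.
have ha : (a < (a + b).+1)%N by rewrite ltnS leq_addr.
rewrite (bigD1 (Ordinal ha)) //= addKn.
move=> h; suff : P (p`_a * q`_b) by case/(hpr _ _ (hp a) (hq b)).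
apply: (dmod_diff hdm h); apply: (dmod_sum (D:=D)) => // k nk.
have [lt|ge] := ltnP k a.
  by case: hP => _ _ _ PM; rewrite mulrC; apply: PM => //; apply: Pp.
case: hP => _ _ _ PM; apply: PM; first exact: hp.
apply: Pq; have : (a < k)%N by rewrite ltn_neqAle ge andbT; apply: contra nk => /eqP e; apply/eqP/val_inj.
move: (ltn_ord k); rewrite ltnS => kab akl.
lia.
Qed.
End Poly.

Section Poly2.
Variable K : fieldType.
Variable D : K -> Prop.
Hypothesis HD : is_subring D.
Local Notation KX := {fraction {poly K}}.

Lemma pE_D0 : pE D (0 : {poly K}). Proof. by move=> i; rewrite coef0; apply: D0. Qed.
Lemma pE_C (E : K -> Prop) a : E 0 -> E a -> pE E a%:P.
Proof. by move=> h0 ha i; rewrite coefC; case: (i == 0)%N. Qed.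
Lemma pE_X : pE D ('X : {poly K}).
Proof. by move=> i; rewrite coefX; case: (i == 1)%N; [apply: D1 | apply: D0]. Qed.
Lemma pE_drop (E : K -> Prop) p : pE E p -> pE E (drop_poly 1 p).
Proof. by move=> h i; rewrite coef_drop_poly. Qed.

Lemma decompX (p : {poly K}) : p = (p`_0)%:P + drop_poly 1 p * 'X.
Proof.
apply/polyP => i; rewrite coefD coefC coefMX coef_drop_poly.
by case: i => [|i] /=; [rewrite addr0 | rewrite add0r addn1].
Qed.

Lemma decompXF (p : {poly K}) :
  (tofrac p : KX) = cst p`_0 + tofrac (drop_poly 1 p) * tofrac 'X.
Proof. by rewrite /cst -tofracM -tofracD -decompX. Qed.

Lemma extX_cst (E : K -> Prop) a : E 0 -> (extX E (cst a) <-> E a).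
Proof.
move=> h0; rewrite /cst extX_tofrac; split; first by move/(_ 0%N); rewrite coefC.
by move=> ha; apply: pE_C.
Qed.

Lemma XP_cst (P : K -> Prop) a : P 0 -> (forall x, P x -> D x) -> (XP D P (cst a) <-> P a).
Proof.
move=> h0 hPD; rewrite /cst XP_tofrac; split; first by case=> _; rewrite coefC.
by move=> ha; split; [apply: pE_C => //; [apply: D0|apply: hPD] | rewrite coefC].
Qed.

Lemma ideal_XP (P : K -> Prop) : ideal D P -> ideal (extX D) (XP D P).
Proof.
move=> hP; have [sPD P0 PD PM] := hP; split.
- by move=> z [p [hp [_ ->]]]; exists p.
- exists 0; split; first exact: pE_D0. by rewrite coef0 tofrac0.
- move=> _ _ [p [hp [h0 ->]]] [q [hq [h0' ->]]]; exists (p + q); rewrite tofracD; split; [|split => //].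
    by move=> i; rewrite coefD; apply: DD.
  by rewrite coefD; apply: PD.
- move=> _ _ [p [hp ->]] [q [hq [h0 ->]]]; exists (p * q); rewrite tofracM; split; [|split => //].
    by move=> i; apply: (coefM_mod (D:=D)) => //; apply: dmodD.
  by rewrite coef0M; apply: PM.
Qed.

Lemma prime_XP (P : K -> Prop) : prime_ideal D P -> prime_ideal (extX D) (XP D P).
Proof.
case=> hP n1 hpr; split; first exact: ideal_XP.
  by case=> p [_ [h0 /tofrac_inj e]]; apply: n1; move: h0; rewrite -e coef1.
move=> _ _ [p [hp ->]] [q [hq ->]]; rewrite -tofracM => /XP_tofrac [_].
rewrite coef0M => /(hpr _ _ (hp 0%N) (hq 0%N)) [h|h]; [left|right]; exact/XP_tofrac.
Qed.

Lemma X_XP (P : K -> Prop) : P 0 -> XP D P (tofrac 'X).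
Proof. by move=> h; apply/XP_tofrac; split; [apply: pE_X | rewrite coefX]. Qed.

Lemma X_notextX (P : K -> Prop) : ~ P 1 -> ~ extX P (tofrac 'X : KX).
Proof. by move=> n1 /extX_tofrac /(_ 1%N); rewrite coefX. Qed.

Lemma tofracX_neq0 : (tofrac 'X : KX) != 0.
Proof. by rewrite tofrac_eq0 polyX_eq0. Qed.

Lemma cst_neq0 a : a != 0 -> cst a != 0 :> KX.
Proof. by move=> h; rewrite /cst tofrac_eq0 polyC_eq0. Qed.

Lemma cstM a b : cst (a * b) = cst a * cst b :> KX.
Proof. by rewrite /cst polyCM tofracM. Qed.

Lemma cst1 : cst 1 = 1 :> KX.
Proof. by rewrite /cst tofrac1. Qed.

End Poly2.

Unset Implicit Arguments.

Lemma pred_ext T (A B : T -> Prop) : (forall x, A x <-> B x) -> A = B.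
Proof. by move=> h; apply: boolp.funext => x; apply: boolp.propext. Qed.

Lemma zorn_helper T (S : (T -> Prop) -> Prop) (A0 : T -> Prop) :
  S A0 ->
  (forall F : (T -> Prop) -> Prop, (forall A, F A -> S A) -> (exists A, F A) ->
     (forall A B, F A -> F B -> (forall x, A x -> B x) \/ (forall x, B x -> A x)) ->
     S (fun x => exists A, F A /\ A x)) ->
  exists M, S M /\ (forall x, A0 x -> M x) /\
    forall B, S B -> (forall x, M x -> B x) -> forall x, B x -> M x.
Proof.
move=> S0 hch.
pose P' := fun A : T -> Prop => S (fun x => A x \/ A0 x).
have [A [PA Amax]] : exists A, P' A /\ forall B, classical_sets.proper A B -> ~ P' B.
  apply: classical_sets.Zorn_bigcup => F FP tot.
  rewrite /P'.
  case: (classic (exists X, F X)) => [neF|eF].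
    pose F' := fun B : T -> Prop => exists X, F X /\ B = (fun x => X x \/ A0 x).
    have -> : (fun x => classical_sets.bigcup F id x \/ A0 x) = (fun x => exists B, F' B /\ B x).
      apply: pred_ext => x; split.
        case=> [[X FX Xx]|a0]; first by exists (fun x => X x \/ A0 x); split; [exists X|left].
        by case: neF => X FX; exists (fun x => X x \/ A0 x); split; [exists X|right].
      case=> B [[X [FX ->]] [Xx|a0]]; [left; exists X | right] => //.
    apply: hch.
    - by move=> B [X [FX ->]]; apply: FP.
    - by case: neF => X FX; exists (fun x => X x \/ A0 x); exists X.
    - move=> B C [X [FX ->]] [Y [FY ->]]; case: (tot X Y FX FY) => h; [left|right];
        by move=> x [h1|h1]; [left; apply: h|right].
  have -> : (fun x => classical_sets.bigcup F id x \/ A0 x) = A0.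
    apply: pred_ext => x; split; last by right.
    by case=> // [[X FX _]]; case: eF; exists X.
  exact: S0.
exists (fun x => A x \/ A0 x); split => //; split; first by move=> x; right.
move=> B SB MB x Bx.
have eB : (fun x => B x \/ A0 x) = B.
  by apply: pred_ext => y; split; [case=> // h; apply: MB; right | left].
have PB : P' B by rewrite /P' eB.
case: (classic (forall y, B y -> A y)) => [h|h]; first by left; apply: h.
by exfalso; apply: (Amax B) => //; split => // y Ay; apply: MB; left.
Qed.

Set Implicit Arguments.

Section Star.
Variable K : fieldType.
Variable D : K -> Prop.
Hypothesis HD : is_subring D.
Variable st : (K -> Prop) -> (K -> Prop).
Hypothesis Hst : semistar D st.

Definition nz (E : K -> Prop) := exists y, E y /\ y != 0.
Local Notation span := (fg_span D).

Lemma span_dmod l : dmod D (span l).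
Proof.
split.
- exists (fun _ => 0); split; first by move=> _; apply: D0.
  by rewrite big1 // => i _; rewrite mul0r.
- move=> _ _ [d [hd ->]] [e [he ->]]; exists (fun i => d i + e i); split.
    by move=> i; apply: DD.
  by rewrite -big_split /=; apply: eq_bigr => i _; rewrite mulrDl.
- move=> c _ hc [d [hd ->]]; exists (fun i => c * d i); split.
    by move=> i; apply: DM.
  by rewrite mulr_sumr; apply: eq_bigr => i _; rewrite mulrA.
Qed.

Lemma span_mem l i : (i < size l)%N -> span l l`_i.
Proof.
move=> hi; exists (fun j => if j == i then 1 else 0); split.
  by move=> j; case: (j == i); [apply: D1 | apply: D0].
rewrite (bigD1 (Ordinal hi)) //= eqxx mul1r big1 ?addr0 // => j nj.
rewrite ifF ?mul0r //; apply: contraNF nj => /eqP e; by apply/eqP/val_inj; rewrite /= e.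
Qed.

Lemma span_sub l (E : K -> Prop) : dmod D E ->
  (forall i, (i < size l)%N -> E l`_i) -> forall x, span l x -> E x.
Proof.
move=> hE hl _ [d [hd ->]]; apply: (dmod_sum (D:=D)) => // i _.
by case: hE => _ _ hM; apply: hM => //; apply: hl.
Qed.

Lemma submod_of (E : K -> Prop) : dmod D E -> nz E -> submod D E.
Proof. by case=> h0 hD hM [y [Ey y0]]; split => //; exists y. Qed.

Lemma submodD : submod D D.
Proof. apply: submod_of; first exact: dmodD. by exists 1; split; [apply: D1 | apply: oner_neq0]. Qed.

Lemma submod_dmod E : submod D E -> dmod D E.
Proof. by case. Qed.

Lemma st_submod E : submod D E -> submod D (st E).
Proof. by case: Hst => h _ _ _ _; apply: h. Qed.

Lemma st_ext E : submod D E -> forall x, E x -> st E x.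
Proof. by case: Hst => _ _ _ h _; apply: h. Qed.

Lemma st_mono E G : submod D E -> submod D G -> (forall x, E x -> G x) ->
  forall x, st E x -> st G x.
Proof. by case: Hst => _ _ h _ _; apply: h. Qed.

Lemma st_idem E : submod D E -> forall x, st (st E) x -> st E x.
Proof. by case: Hst => _ _ _ _ h hE x; case: (h E hE x). Qed.

Lemma st_absorb F G : submod D F -> submod D G -> (forall x, F x -> st G x) ->
  forall x, st F x -> st G x.
Proof.
move=> hF hG h x hx; apply: st_idem => //; apply: (st_mono hF) => //.
exact: st_submod.
Qed.

Lemma one_in F : submod D F -> st F 1 -> forall y, st D y -> st F y.
Proof.
move=> hF h1; apply: st_absorb => //; first exact: submodD.
move=> d hd; rewrite -[d]mulr1; have [_ _ hM _] := st_submod hF; exact: hM.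
Qed.

Lemma submod_span l : nz (span l) -> submod D (span l).
Proof. by move=> h; apply: submod_of => //; apply: span_dmod. Qed.

Lemma star_f_of_mem I : ideal D I -> nz I -> forall x, I x -> star_f D st I x.
Proof.
move=> hI [y [Iy y0]] x Ix; have hdI := ideal_dmod hI.
case: (eqVneq x 0) => [->|x0].
  exists [:: y]; have nzs : nz (span [:: y]) by exists y; split => //; apply: (span_mem (l:=[:: y]) (i:=0)).
  split => //; split.
    by apply: span_sub => // i; rewrite ltnS leqn0 => /eqP ->.
  by have [h0 _ _ _] := st_submod (submod_span nzs).
exists [:: x]; have nzs : nz (span [:: x]) by exists x; split => //; apply: (span_mem (l:=[:: x]) (i:=0)).
split => //; split.
  by apply: span_sub => // i; rewrite ltnS leqn0 => /eqP ->.
by apply: st_ext; [apply: submod_span | apply: (span_mem (l:=[:: x]) (i:=0))].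
Qed.

End Star.

Lemma chain_fin (T : Type) (x0 : T) (F : (T -> Prop) -> Prop) :
  (exists A, F A) ->
  (forall A B, F A -> F B -> (forall x, A x -> B x) \/ (forall x, B x -> A x)) ->
  forall l : seq T, (forall i, (i < size l)%N -> exists A, F A /\ A (nth x0 l i)) ->
  exists A, F A /\ forall i, (i < size l)%N -> A (nth x0 l i).
Proof.
move=> [A0 FA0] tot; elim=> [|y l IH] hl; first by exists A0.
have [A [FA hA]] : exists A, F A /\ forall i, (i < size l)%N -> A (nth x0 l i).
  by apply: IH => i hi; apply: (hl i.+1).
have [B [FB By]] := hl 0%N isT.
case: (tot A B FA FB) => h.
  by exists B; split => // -[|i] //= hi; apply: h; apply: hA.
by exists A; split => // -[|i] //= hi; [apply: h | apply: hA].
Qed.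

Section Zmax.
Variable K : fieldType.
Variable D : K -> Prop.
Hypothesis HD : is_subring D.
Variable st : (K -> Prop) -> (K -> Prop).
Hypothesis Hst : semistar D st.
Local Notation span := (fg_span D).

Lemma decomp_list (M : K -> Prop) x (l : seq K) :
  (forall i, (i < size l)%N -> exists m d, M m /\ D d /\ l`_i = m + x * d) ->
  exists h : seq K, (forall j, (j < size h)%N -> M h`_j) /\
    forall i, (i < size l)%N -> exists j d, (j < size h)%N /\ D d /\ l`_i = h`_j + x * d.
Proof.
elim: l => [|y l IH] hl; first by exists [::].
have [h [hM hh]] := IH (fun i hi => hl i.+1 hi).
have [m [d [Mm [Dd ey]]]] := hl 0%N isT.
exists (m :: h); split; first by case=> [|j] //= hj; apply: hM.
case=> [|i] /= hi; first by exists 0%N, d.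
by have [j [d' [hj [hd' e]]]] := hh i hi; exists j.+1, d'.
Qed.

Lemma Zmax J : ideal D J -> nz J -> ~ star_f D st J 1 ->
  exists M, quasi_max D (star_f D st) M /\ forall x, J x -> M x.
Proof.
move=> hJ nzJ nJ1.
pose S := fun A => [/\ ideal D A, forall x, J x -> A x & ~ star_f D st A 1].
have [M [[hM JM nM1] [_ Mmax]]] : exists M, S M /\ (forall x, J x -> M x) /\
    forall B, S B -> (forall x, M x -> B x) -> forall x, B x -> M x.
  apply: zorn_helper; first by split.
  move=> F FS [A0 FA0] tot; split.
  - split.
    + by move=> x [A [FA Ax]]; have [[h _ _ _] _ _] := FS A FA; apply: h.
    + by exists A0; split => //; have [[_ h _ _] _ _] := FS A0 FA0.
    + move=> x y [A [FA Ax]] [B [FB By]]; case: (tot A B FA FB) => h.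
        by exists B; split => //; have [[_ _ hD _] _ _] := FS B FB; apply: hD => //; apply: h.
      by exists A; split => //; have [[_ _ hD _] _ _] := FS A FA; apply: hD => //; apply: h.
    + move=> d x hd [A [FA Ax]]; exists A; split => //.
      by have [[_ _ _ hM] _ _] := FS A FA; apply: hM.
  - by move=> x Jx; exists A0; split => //; have [_ h _] := FS A0 FA0; apply: h.
  - case=> l [nzl [sl h1]].
    have [A [FA hA]] := chain_fin (x0:=0) (ex_intro _ A0 FA0) tot
      (fun i hi => sl _ (span_mem HD hi)).
    have [hA' _ nA1] := FS A FA; apply: nA1; exists l; split => //; split => //.
    move=> x hx; apply: (span_sub (ideal_dmod hA') hA hx).
have nzM : nz M by case: nzJ => y [Jy y0]; exists y; split => //; apply: JM.
have hMD : forall x, M x -> D x by case: hM.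
have qM : quasi_ideal D (star_f D st) M.
  split => //; try by case: nzM => y h; exists y.
  move=> x; split; last first.
    by move=> Mx; split; [apply: (star_f_of_mem HD Hst hM nzM) | apply: hMD].
  case=> [[g [nzg [sg stgx]]] Dx].
  pose A := fun y => exists m d, M m /\ D d /\ y = m + x * d.
  have hA : ideal D A.
    split.
    - move=> _ [m [d [Mm [Dd ->]]]]; apply: DD => //; first exact: hMD.
      exact: DM.
    - by exists 0, 0; split; [case: hM | split; [apply: D0|rewrite mulr0 addr0]].
    - move=> _ _ [m [d [Mm [Dd ->]]]] [m' [d' [Mm' [Dd' ->]]]].
      exists (m + m'), (d + d'); split; first by case: hM => _ _ h _; apply: h.
      by split; [apply: DD | rewrite mulrDr addrACA].
    - move=> c _ hc [m [d [Mm [Dd ->]]]]; exists (c * m), (c * d); split.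
        by case: hM => _ _ _ h; apply: h.
      by split; [apply: DM | rewrite mulrDr mulrCA].
  case: (classic (star_f D st A 1)) => [[l [nzl [sl stl1]]]|nA1]; last first.
    have SA : S A.
      split => // y Jy; exists y, 0; split; first exact: JM.
      by split; [apply: D0 | rewrite mulr0 addr0].
    have Ax : A x by exists 0, 1; split; [case: hM|split; [apply: D1|rewrite add0r mulr1]].
    apply: (Mmax A SA) => // y My; exists y, 0; split => //.
    by split; [apply: D0 | rewrite mulr0 addr0].
  exfalso; apply: nM1.
  have [h [hhM hh]] := decomp_list (fun i hi => sl _ (span_mem HD hi)).
  pose H := h ++ g.
  have gH : forall y, span g y -> span H y.
    apply: (span_sub (span_dmod HD H)) => j hj.
    have -> : g`_j = H`_(size h + j) by rewrite /H nth_cat ltnNge leq_addr /= addKn.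
    by apply: span_mem => //; rewrite /H size_cat ltn_add2l.
  have nzH : nz (span H) by case: nzg => y [gy y0]; exists y; split => //; apply: gH.
  have hsH := submod_span HD nzH.
  have HM : forall y, span H y -> M y.
    apply: (span_sub (ideal_dmod hM)) => j; rewrite /H size_cat nth_cat.
    case: ifP => hj hj2; first by apply: hhM.
    move/negbT: hj; rewrite -leqNgt => hj.
    by apply: sg; apply: (span_mem HD); rewrite ltn_subLR.
  exists H; split => //; split => //.
  have lH : forall y, span l y -> st (span H) y.
    apply: (span_sub (submod_dmod (st_submod Hst hsH))) => i hi.
    have [j [d [hj [Dd ->]]]] := hh i hi.
    have [_ hDst hMst _] := st_submod Hst hsH.
    apply: hDst.
      apply: (st_ext Hst hsH); have -> : h`_j = H`_j by rewrite /H nth_cat hj.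
      by apply: (span_mem HD); rewrite /H size_cat ltn_addr.
    rewrite mulrC; apply: hMst => //.
    apply: (st_mono Hst (submod_span HD nzg) hsH gH) => //.
  exact: (st_absorb Hst (submod_span HD nzl) hsH lH).
exists M; split => //; split => //.
  by move=> M1; apply: nM1; apply: (star_f_of_mem HD Hst hM nzM).
move=> I qI nI1 MI; have [hI _ hqI] := qI.
apply: (Mmax I) => //; split => //.
  by move=> x Jx; apply: MI; apply: JM.
by move=> h; apply: nI1; apply/hqI; split => //; apply: D1.
Qed.

End Zmax.

Section PX.
Variable K : fieldType.
Variable D : K -> Prop.
Hypothesis HD : is_subring D.
Variable st : (K -> Prop) -> (K -> Prop).
Hypothesis Hst : semistar D st.
Local Notation KX := {fraction {poly K}}.
Local Notation span := (fg_span D).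

Lemma extX_D1 : extX D (1 : KX).
Proof. by rewrite -tofrac1; apply/extX_tofrac => i; rewrite coef1; case: (i == 0)%N; [apply: D1|apply: D0]. Qed.

Lemma extX_D0 : extX D (0 : KX).
Proof. by rewrite -tofrac0; apply/extX_tofrac => j; rewrite coef0; apply: D0. Qed.

Lemma coef1' (i : nat) : (1 : {poly KX})`_i = if (i == 0)%N then 1 else 0.
Proof. by rewrite coef1; case: (i == 0)%N. Qed.

Lemma extX_cstD a : D a -> extX D (cst a).
Proof. by move=> h; apply/(extX_cst a (D0 HD)). Qed.

Lemma quasi_of_theta op (N : KX -> Prop) : prime_ideal (extX D) N ->
  (exists z, N z /\ z != 0) -> Theta D op N -> quasi_ideal (extX D) (starX D op) N.
Proof.
move=> hN nzN thN; have [[sN N0 ND NM] n1 hpr] := hN.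
split => // z; split.
  case=> -[g [[gD gT] gz]] Dz.
  have [i ni] : exists i, ~ N g`_i by apply: not_all_ex_not; apply: gT.
  by case: (hpr _ _ (gD i) Dz (gz i)).
move=> Nz; split; last exact: sN.
exists 1; split; last first.
  by move=> i; rewrite coef1'; case: (i == 0)%N; [rewrite mul1r | rewrite mul0r; case: hN => -[]].
split.
  by move=> i; rewrite coef1'; case: (i == 0)%N; [apply: extX_D1 | apply: extX_D0].
by move=> Q [[_ nQ1 _] _] h; apply: nQ1; move: (h 0%N); rewrite coef1'.
Qed.

Lemma contr_prime (Q : KX -> Prop) : prime_ideal (extX D) Q -> prime_ideal D (contr D Q).
Proof.
move=> [[sQ Q0 QD QM] n1 hpr]; split; first split.
- by move=> a [].
- by split; [apply: D0 | rewrite /= tofrac0].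
- move=> a b [Da Qa] [Db Qb]; split; first exact: DD.
  by rewrite polyCD tofracD; apply: QD.
- move=> d a Dd [Da Qa]; split; first exact: DM.
  by rewrite polyCM tofracM; apply: QM => //; apply: extX_cstD.
- by case=> _; rewrite tofrac1.
- move=> a b Da Db [_]; rewrite polyCM tofracM => /(hpr _ _ (extX_cstD Da) (extX_cstD Db)).
  by case=> h; [left|right].
Qed.

Lemma F1 (P : K -> Prop) : quasi_ideal D (tilde D st) P -> ~ P 1 ->
  forall l, nz (span l) -> (forall x, span l x -> P x) -> ~ st (span l) 1.
Proof.
move=> [[sP _ _ _] _ hq] n1 l nzl sl h1; apply: n1; apply/hq; split; last exact: D1.
move=> M [[hM _ hqM] nM1 _].
have [s [ls nMs]] : exists s, span l s /\ ~ M s.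
  apply: NNPP => hn; apply: nM1; apply/hqM; split; last exact: D1.
  exists l; split => //; split => // x lx; apply: NNPP => nx; apply: hn; by exists x.
by exists s; split => //; [apply: sP; apply: sl | rewrite mulr1; apply: sl].
Qed.

Lemma theta_st (P : K -> Prop) (Q : KX -> Prop) : quasi_ideal D (tilde D st) P -> ~ P 1 ->
  prime_ideal (extX D) Q -> (forall a, contr D Q a -> P a) -> Theta D st Q.
Proof.
move=> qP n1 hQ cQP; split => //; right; split.
  move=> x [l [nzl [sl stx]]]; apply: (st_mono Hst (submod_span HD nzl) (submodD HD)) stx.
  by move=> y /sl [].
move=> h; have := h 1 (st_ext Hst (submodD HD) (D1 HD)).
case=> l [nzl [sl st1]]; apply: (F1 qP n1 nzl) st1.
by move=> y /sl; apply: cQP.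
Qed.

Lemma theta_tilde (P : K -> Prop) (Q : KX -> Prop) : quasi_ideal D (tilde D st) P -> ~ P 1 ->
  prime_ideal (extX D) Q -> (forall a, contr D Q a -> P a) -> Theta D (tilde D st) Q.
Proof.
move=> [[sP _ _ _] _ hq] n1 hQ cQP; split => //; right; split.
  move=> x [l [nzl [sl tx]]] M qM; have [s [Ds nMs lsx]] := tx M qM.
  by exists s; split => //; case: (sl _ lsx).
move=> h; have : tilde D st D 1.
  by move=> M [_ nM1 _]; exists 1; split => //; [apply: D1| rewrite mulr1; apply: D1].
move/h => [l [nzl [sl t1]]]; apply: n1; apply/hq; split; last exact: D1.
move=> M qM; have [s [Ds nMs ls]] := t1 M qM.
by exists s; split => //; apply: cQP; apply: sl.
Qed.

Lemma contr_extX (P : K -> Prop) : P 0 -> (forall x, P x -> D x) ->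
  forall a, contr D (extX P) a <-> P a.
Proof.
move=> h0 hPD a; split; first by case=> _ /(extX_cst a h0).
by move=> ha; split; [apply: hPD | apply/(extX_cst a h0)].
Qed.

Lemma contr_XP (P : K -> Prop) : P 0 -> (forall x, P x -> D x) ->
  forall a, contr D (XP D P) a <-> P a.
Proof.
move=> h0 hPD a; split; first by case=> _ /(XP_cst HD a h0 hPD).
by move=> ha; split; [apply: hPD | apply/(XP_cst HD a h0 hPD)].
Qed.

Lemma lemmaK (N : KX -> Prop) : quasi_prime (extX D) (starX D st) N ->
  nz (contr D N) -> quasi_prime D (tilde D st) (contr D N).
Proof.
move=> [[hNi nzN hqN] hN] nzc.
have hc := contr_prime hN; have [hci _ _] := hc.
split => //; split => // x; split; last first.
  move=> cx; split; last by case: cx.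
  by move=> M [_ nM1 _]; exists 1; split => //; [apply: D1 | rewrite mul1r].
case=> tx Dx.
pose J := fun s => D s /\ contr D N (s * x).
have hJ : ideal D J.
  have [_ c0 cD cM] := hci.
  split.
  - by move=> s [].
  - by split; [apply: D0 | rewrite mul0r].
  - move=> s t [Ds cs] [Dt ct]; split; first exact: DD.
    by rewrite mulrDl; apply: cD.
  - move=> d s Dd [Ds cs]; split; first exact: DM.
    by rewrite -mulrA; apply: cM.
have nzJ : nz J.
  case: nzc => y [cy y0]; exists y; split => //; split; first by case: cy.
  by rewrite mulrC; case: hci => _ _ _ h; apply: h.
case: (classic (star_f D st J 1)) => [[l [nzl [sl st1]]]|nJ1]; last first.
  have [M [qM JM]] := Zmax HD Hst hJ nzJ nJ1.
  have [s [Ds nMs cs]] := tx M qM.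
  by exfalso; apply: nMs; apply: JM.
pose g : {poly KX} := \poly_(i < size l) cst l`_i.
have lJ i : (i < size l)%N -> J l`_i by move=> hi; apply: sl; apply: (span_mem HD).
suff : N (cst x) by move=> h; split.
apply/hqN; split; last exact: extX_cstD.
exists g; split; last first.
  move=> i; rewrite coef_poly; case: ifP => hi; last by rewrite mul0r; case: hNi.
  by rewrite -cstM; have [_ []] := lJ i hi.
split.
  move=> i; rewrite coef_poly; case: ifP => hi.
    by apply: extX_cstD; case: (lJ i hi).
  exact: extX_D0.
move=> Q [hQ thQ] allQ.
have hcQ := contr_prime hQ; have [hcQi _ _] := hcQ.
have lQ : forall y, span l y -> contr D Q y.
  apply: (span_sub (ideal_dmod hcQi)) => i hi; split; first by case: (lJ i hi).
  by move: (allQ i); rewrite coef_poly hi.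
case: thQ => [h0|[_ hns]].
  by case: nzl => y [ly y0]; move: y0; rewrite (h0 y (lQ y ly)) eqxx.
apply: hns => y sDy; exists l; split => //; split => //.
exact: (one_in HD Hst (submod_span HD nzl) st1).
Qed.

End PX.

Lemma psub_trans1 (T : fieldType) (A B C : T -> Prop) :
  psubset A B -> Defs.subset B C -> psubset A C.
Proof. by move=> [AB nBA] BC; split => [x /AB /BC|h]//; apply: nBA => x /BC /h. Qed.

Lemma psub_trans2 (T : fieldType) (A B C : T -> Prop) :
  Defs.subset A B -> psubset B C -> psubset A C.
Proof. by move=> AB [BC nCB]; split => [x /AB /BC|h]//; apply: nCB => x /h /AB. Qed.

Lemma psub_neq (T : fieldType) (A B : T -> Prop) : psubset A B -> A <> B.
Proof. by move=> [_ h] e; apply: h; rewrite e. Qed.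

Lemma strict_list (T : fieldType) (l : seq (T -> Prop)) n :
  (forall i, (i < n)%N -> psubset (nth (fun _ => False) l i) (nth (fun _ => False) l i.+1)) ->
  forall i j, (i < j)%N -> (j <= n)%N -> psubset (nth (fun _ => False) l i) (nth (fun _ => False) l j).
Proof.
move=> h i; elim=> [|j IH] //; rewrite ltnS leq_eqVlt => /orP [/eqP ->|ij] jn.
  by apply: h.
apply: psub_trans1 (IH ij (ltnW jn)) _; by case: (h j jn).
Qed.

Section Main.
Variable K : fieldType.
Variable D : K -> Prop.
Hypothesis HD : is_subring D.
Variable st : (K -> Prop) -> (K -> Prop).
Hypothesis Hst : semistar D st.
Hypothesis Hcat : catenary (extX D) (starX D st).
Local Notation KX := {fraction {poly K}}.

Lemma ideal_subX (N : KX -> Prop) : ideal (extX D) N -> forall a b, N a -> N b -> N (a - b).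
Proof.
move=> [_ _ ND NM] a b Na Nb; apply: ND => //.
have -> : - b = cst (-1) * b by rewrite /cst polyCN tofracN tofrac1 mulN1r.
by apply: NM => //; apply: extX_cstD => //; apply: DN => //; apply: D1.
Qed.

Variables P1 P2 : K -> Prop.
Hypothesis q1 : quasi_prime D (tilde D st) P1.
Hypothesis q2 : quasi_prime D (tilde D st) P2.
Hypothesis p12 : psubset P1 P2.
Hypothesis noint : ~ exists P, [/\ quasi_prime D (tilde D st) P, psubset P1 P & psubset P P2].

Let e1 : KX -> Prop := extX P1.
Let e2 : KX -> Prop := extX P2.
Let x1 : KX -> Prop := XP D P1.
Let x2 : KX -> Prop := XP D P2.

Lemma qfacts (P : K -> Prop) : quasi_prime D (tilde D st) P ->
  [/\ ideal D P, ~ P 1, P 0, forall x, P x -> D x & nz P].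
Proof.
move=> [[hi [y [Py y0]] _] [_ n1 _]]; split => //; try by case: hi.
by exists y.
Qed.

Lemma qpst (P : K -> Prop) (N : KX -> Prop) : quasi_prime D (tilde D st) P ->
  prime_ideal (extX D) N -> (exists z, N z /\ z != 0) ->
  (forall a, contr D N a -> P a) -> quasi_prime (extX D) (starX D st) N.
Proof.
move=> qP hN nzN cN; split => //; apply: (quasi_of_theta HD) => //.
by apply: (theta_st HD Hst (P := P)) => //; [case: qP | case: (qfacts qP)].
Qed.

Lemma qp_e (P : K -> Prop) : quasi_prime D (tilde D st) P ->
  quasi_prime (extX D) (starX D st) (extX P).
Proof.
move=> qP; have [hi n1 P0 PD [y [Py y0]]] := qfacts qP.
apply: (qpst qP); first by apply: prime_extX; case: qP.
  by exists (cst y); split; [apply/(extX_cst y P0) | apply: cst_neq0].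
by move=> a /(contr_extX P0 PD).
Qed.

Lemma qp_x (P : K -> Prop) : quasi_prime D (tilde D st) P ->
  quasi_prime (extX D) (starX D st) (XP D P).
Proof.
move=> qP; have [hi n1 P0 PD _] := qfacts qP.
apply: (qpst qP); first by apply: prime_XP => //; case: qP.
  by exists (tofrac 'X); split; [apply: (X_XP HD P0) | apply: tofracX_neq0].
by move=> a /(contr_XP HD P0 PD).
Qed.

Lemma qp_e_tilde (P : K -> Prop) : quasi_prime D (tilde D st) P ->
  quasi_prime (extX D) (starX D (tilde D st)) (extX P).
Proof.
move=> qP; have [hi n1 P0 PD [y [Py y0]]] := qfacts qP.
have hpr : prime_ideal (extX D) (extX P) by apply: prime_extX; case: qP.
split => //; apply: (quasi_of_theta HD) => //.
  by exists (cst y); split; [apply/(extX_cst y P0) | apply: cst_neq0].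
apply: (theta_tilde HD (P := P)) => //; first by case: qP.
by move=> a /(contr_extX P0 PD).
Qed.


Lemma e1x1 : Defs.subset e1 x1.
Proof.
have [_ _ _ P1D _] := qfacts q1.
by move=> z [p [hp ->]]; apply/XP_tofrac; split => // i; apply: P1D.
Qed.

Lemma e2x2 : Defs.subset e2 x2.
Proof.
have [_ _ _ P2D _] := qfacts q2.
by move=> z [p [hp ->]]; apply/XP_tofrac; split => // i; apply: P2D.
Qed.

Lemma x1x2 : Defs.subset x1 x2.
Proof. by move=> z [p [hp [h0 ->]]]; apply/XP_tofrac; split => //; case: p12 => h _; apply: h. Qed.

Lemma e1e2 : Defs.subset e1 e2.
Proof. by move=> z; apply: extX_sub; case: p12. Qed.

Lemma pE_mulX (p : {poly K}) : pE D p -> pE D (p * 'X).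
Proof. by move=> hp i; rewrite coefMX; case: (i == 0)%N => //; apply: D0. Qed.

Lemma lem_i (N : KX -> Prop) : quasi_prime (extX D) (starX D st) N ->
  Defs.subset e1 N -> Defs.subset N x1 -> Defs.subset N e1 \/ Defs.subset x1 N.
Proof.
move=> [[hNi _ _] [_ _ hpr]] e1N Nx1.
have [_ _ P10 P1D _] := qfacts q1.
have [_ _ ND NM] := hNi.
case: (classic (N (tofrac 'X))) => NX.
  right => z [p [hp [h0 ->]]]; rewrite decompXF; apply: ND.
    by apply: e1N; apply/(extX_cst p`_0 P10).
  by apply: NM => //; apply/extX_tofrac; apply: pE_drop.
left.
have claim : forall n (p : {poly K}), (size p <= n)%N -> pE D p -> N (tofrac p) -> pE P1 p.
  elim=> [|n IH] p sp hp Np.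
    by move: sp; rewrite leqn0 size_poly_eq0 => /eqP -> i; rewrite coef0.
  have P1p0 : P1 p`_0 by case/XP_tofrac: (Nx1 _ Np).
  have Nd : N (tofrac (drop_poly 1 p) * tofrac 'X).
    have -> : tofrac (drop_poly 1 p) * tofrac 'X = tofrac p - cst p`_0 :> KX.
      by rewrite [in RHS]decompXF addrC addKr.
    by apply: (ideal_subX hNi) => //; apply: e1N; apply/(extX_cst p`_0 P10).
  have hd : pE D (drop_poly 1 p) by apply: pE_drop.
  case: (hpr _ _ (proj2 (extX_tofrac _ _) hd) (proj2 (extX_tofrac _ _) (pE_X HD)) Nd) => // Nd'.
  have h : pE P1 (drop_poly 1 p).
    by apply: IH => //; rewrite size_drop_poly leq_subLR add1n.
  by case=> [|i] //; move: (h i); rewrite coef_drop_poly addn1.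
move=> z Nz; have := Nx1 _ Nz; case=> p [hp [_ ez]]; rewrite ez in Nz *.
by apply/extX_tofrac; apply: (claim (size p)).
Qed.

Lemma lem_ii (N : KX -> Prop) : quasi_prime (extX D) (starX D st) N ->
  Defs.subset x1 N -> Defs.subset N x2 -> Defs.subset N x1 \/ Defs.subset x2 N.
Proof.
move=> qN x1N Nx2; have [[hNi _ _] [_ _ hpr]] := qN.
have [_ _ P10 P1D nz1] := qfacts q1.
have [_ _ P20 P2D _] := qfacts q2.
have [_ _ ND NM] := hNi.
pose c := contr D N.
have P1c : forall a, P1 a -> c a.
  by move=> a ha; split; [apply: P1D | apply: x1N; apply/(XP_cst HD a P10 P1D)].
have cP2 : forall a, c a -> P2 a.
  by move=> a [Da Na]; apply/(XP_cst HD a P20 P2D); apply: Nx2.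
have nzc : nz c by case: nz1 => y [Py y0]; exists y; split => //; apply: P1c.
have qc := lemmaK HD Hst qN nzc.
have : Defs.subset c P1 \/ Defs.subset P2 c.
  apply: NNPP => /not_or_and [h1 h2]; apply: noint; exists c; split => //.
case=> [cP1|P2c]; [left|right].
  move=> z Nz; have := Nx2 _ Nz; case=> p [hp [_ ez]]; rewrite ez in Nz *.
  have hx : N (tofrac (drop_poly 1 p) * tofrac 'X).
    apply: x1N; rewrite -tofracM; apply/XP_tofrac; split.
      by apply: pE_mulX; apply: pE_drop.
    by rewrite coefMX.
  have Nc : N (cst p`_0).
    have -> : cst p`_0 = tofrac p - tofrac (drop_poly 1 p) * tofrac 'X :> KX.
      by rewrite [in RHS]decompXF addrK.
    exact: ideal_subX.
  by apply/XP_tofrac; split => //; apply: cP1; split.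
move=> z [p [hp [h0 ->]]]; rewrite decompXF; apply: ND.
  by case: (P2c _ h0).
by apply: NM; [apply/extX_tofrac; apply: pE_drop | apply: x1N; apply: (X_XP HD P10)].
Qed.

Lemma e2x2p : psubset e2 x2.
Proof.
have [_ n21 P20 _ _] := qfacts q2.
split; first exact: e2x2.
by move=> h; apply: (X_notextX n21); apply: h; apply: (X_XP HD P20).
Qed.

Lemma union_qchain (F : ((KX -> Prop) -> Prop) -> Prop) :
  (forall C, F C -> qchain (extX D) (starX D st) e1 x2 C) -> (exists C, F C) ->
  (forall A B, F A -> F B -> (forall x, A x -> B x) \/ (forall x, B x -> A x)) ->
  qchain (extX D) (starX D st) e1 x2 (fun x => exists C, F C /\ C x).
Proof.
move=> FS [C0 FC0] tot; have [_ h1 h2 _] := FS C0 FC0; split.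
- by move=> A [C [FC CA]]; have [h _ _ _] := FS C FC; apply: h.
- by exists C0.
- by exists C0.
- move=> A B [C [FC CA]] [C' [FC' CB]].
  case: (tot C C' FC FC') => h.
    by have [_ _ _ t] := FS C' FC'; apply: t => //; apply: h.
  by have [_ _ _ t] := FS C FC; apply: t => //; apply: h.
Qed.

Lemma no_between (Q : KX -> Prop) : quasi_prime (extX D) (starX D (tilde D st)) Q ->
  psubset e1 Q -> psubset Q e2 -> False.
Proof.
move=> [[hQi nzQ _] hQp] e1Q Qe2.
have [_ n11 P10 P1D _] := qfacts q1.
have [_ n21 P20 P2D _] := qfacts q2.
have qe1 := qp_e q1; have qe2 := qp_e q2; have qx1 := qp_x q1; have qx2 := qp_x q2.
have qQ : quasi_prime (extX D) (starX D st) Q.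
  apply: (qpst q2) => // a [Da Qa]; apply/(extX_cst a P20).
  by case: Qe2 => h _; apply: h.
have Qe2s : Defs.subset Q e2 by case: Qe2.
have e1Qs : Defs.subset e1 Q by case: e1Q.
have e1x2 : psubset e1 x2 by apply: psub_trans1 e1Q _ => z /Qe2s /e2x2.
have e1x1s : Defs.subset e1 x1 by exact: e1x1.
have x1x2s : Defs.subset x1 x2 by exact: x1x2.
have e1x2s : Defs.subset e1 x2 by move=> z /e1x1s /x1x2s.
have e2x2s : Defs.subset e2 x2 by exact: e2x2.
have e1e2s : Defs.subset e1 e2 by exact: e1e2.
have Qx2s : Defs.subset Q x2 by move=> z /Qe2s /e2x2s.
have refl : forall A : KX -> Prop, Defs.subset A A by move=> A z.
pose chain2 := fun A : KX -> Prop => [\/ A = e1, A = x1 | A = x2].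
have qc2 : qchain (extX D) (starX D st) e1 x2 chain2.
  split; [| by constructor 1 | by constructor 3 |].
    by move=> A [->|->|->]; split => //; split => //; apply: refl.
  by move=> A B [->|->|->] [->|->|->]; solve [left; by [] | right; by [] | left; apply: refl].
have sat2 : saturated_qchain (extX D) (starX D st) e1 x2 chain2.
  split => // C' [hC' _ _ tot] sub A CA.
  have [qA [e1A Ax2]] := hC' A CA.
  case: (tot A x1 CA (sub x1 ltac:(by constructor 2))) => h.
    case: (lem_i qA e1A h) => h'.
      by constructor 1; apply: pred_ext => z; split => [/h'|/e1A].
    by constructor 2; apply: pred_ext => z; split => [/h|/h'].
  case: (lem_ii qA h Ax2) => h'.
    by constructor 2; apply: pred_ext => z; split => [/h'|/h].
  by constructor 3; apply: pred_ext => z; split => [/Ax2|/h'].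
pose base := fun A : KX -> Prop => [\/ A = e1, A = Q, A = e2 | A = x2].
have qb : qchain (extX D) (starX D st) e1 x2 base.
  split; [| by constructor 1 | by constructor 4 |].
    by move=> A [->|->|->|->]; split => //; split => //; apply: refl.
  by move=> A B [->|->|->|->] [->|->|->|->]; solve [left; by [] | right; by [] | left; apply: refl].
have [M [qM [bM Mmax]]] := @zorn_helper _ _ _ qb (@union_qchain).
have satM : saturated_qchain (extX D) (starX D st) e1 x2 M.
  by split => // C' qC' MC'; apply: Mmax.
have [n [[l [sl strl ml]] [l2 [sl2 strl2 ml2]]]] :=
  Hcat qe1 qx2 e1x2 satM sat2.
have n2 : (n <= 2)%N.
  rewrite leqNgt; apply/negP => n3.
  have c2 : forall i, (i <= 3)%N -> chain2 (nth (fun _ => False) l2 i).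
    by move=> i hi; apply/ml2; exists i => //; apply: leq_ltn_trans hi _.
  have ne : forall i j, (i < j)%N -> (j <= 3)%N ->
      nth (fun _ => False) l2 i <> nth (fun _ => False) l2 j.
    move=> i j ij j3; apply: psub_neq; apply: strict_list strl2 _ _ ij _.
    exact: leq_trans j3 n3.
  have := ne 0%N 1%N isT isT; have := ne 0%N 2%N isT isT; have := ne 0%N 3%N isT isT.
  have := ne 1%N 2%N isT isT; have := ne 1%N 3%N isT isT; have := ne 2%N 3%N isT isT.
  case: (c2 0%N isT) => ->; case: (c2 1%N isT) => ->; case: (c2 2%N isT) => ->;
    case: (c2 3%N isT) => ->; congruence.
have [i1 h1 e1e] := proj1 (ml e1) (bM e1 ltac:(by constructor 1)).
have [i2 h2 e2e] := proj1 (ml Q) (bM Q ltac:(by constructor 2)).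
have [i3 h3 e3e] := proj1 (ml e2) (bM e2 ltac:(by constructor 3)).
have [i4 h4 e4e] := proj1 (ml x2) (bM x2 ltac:(by constructor 4)).
have d12 : i1 <> i2 by move=> e; apply: (psub_neq e1Q); rewrite e1e e2e e.
have e1e2p : psubset e1 e2 by apply: psub_trans1 e1Q Qe2s.
have d13 : i1 <> i3 by move=> e; apply: (psub_neq e1e2p); rewrite e1e e3e e.
have d14 : i1 <> i4 by move=> e; apply: (psub_neq e1x2); rewrite e1e e4e e.
have d23 : i2 <> i3 by move=> e; apply: (psub_neq Qe2); rewrite e2e e3e e.
have Qx2 : psubset Q x2 by apply: psub_trans1 Qe2 e2x2.
have d24 : i2 <> i4 by move=> e; apply: (psub_neq Qx2); rewrite e2e e4e e.
have d34 : i3 <> i4 by move=> e; apply: (psub_neq e2x2p); rewrite e3e e4e e.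
lia.
Qed.

Lemma e1e2p : psubset e1 e2.
Proof.
split; first exact: e1e2.
have [_ _ P10 _ _] := qfacts q1; have [_ _ P20 _ _] := qfacts q2.
move=> h; case: p12 => s12 ns; apply: ns => a Pa.
by apply/(extX_cst a P10); apply: h; apply/(extX_cst a P20).
Qed.

End Main.



Theorem mainTheorem9 (K : fieldType) (D : K -> Prop)
    (st : (K -> Prop) -> (K -> Prop)) :
  is_subring D -> quotient_field_of D -> semistar D st ->
  catenary (extX D) (starX D st) ->
  strong_S_domain D (tilde D st).
Proof.
move=> HD _ Hst Hcat P1 P2 [q1 q2 p12 noint]; split.
- exact: (qp_e_tilde HD q1).
- exact: (qp_e_tilde HD q2).
- exact: (e1e2p q1 q2 p12).
- by case=> Q [qQ e1Q Qe2]; apply: (no_between HD Hst Hcat q1 q2 p12 noint qQ e1Q Qe2).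
Qed.
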